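(* Let $\mathbf R'=\{R'_i,t'_i\}$, $\mathbf S=\{S_i,u_i\}$, $\mathbf S'=\{S'_i,u'_i\}$ be preperfectoid towers arising from pairs $(R',I'_0)$, $(S,J_0)$, $(S',J'_0)$, with first perfectoid pillars $I'_1,J_1,J'_1$. Let $\psi'\colon\mathbf R'\to\mathbf S'$ and $\sigma\colon\mathbf S\to\mathbf S'$ be morphisms of towers with $I'_0S'_0=J_0S'_0=J'_0$ and $I'_1S'_1=J_1S'_1=J'_1$ (extensions along $\psi'_0,\sigma_0$, resp. $\psi'_1,\sigma_1$), and with every $\sigma_i$ surjective. Let $\mathbf R=\{R_i,t_i\}$ be the levelwise fibre product $R_i=R'_i\times_{S'_i}S_i$ with projections $\rho\colon\mathbf R\to\mathbf R'$, $\psi\colon\mathbf R\to\mathbf S$, and define ideals $I_0:=I'_0\times_{J'_0}J_0\subset R_0$ and $I_1:=I'_1\times_{J'_1}J_1\subset R_1$. Assume: (i) $I_0$ is generated by an element $f_0=(f'_0,g_0)$ with $f'_0R'_0=I'_0$ and $g_0S_0=J_0$; (ii) $I_1$ is generated by an element $f_1=(f'_1,g_1)$ with $f'_1R'_1=I'_1$ and $g_1S_1=J_1$; (iii) for every $i\ge0$, the squares of modules formed by $I_0R_i\to J_0S_i$, $I_0R_i\to I'_0R'_i$, $I'_0R'_i\to J'_0S'_i$, $J_0S_i\to J'_0S'_i$ (restrictions of $\psi_i,\rho_i,\psi'_i,\sigma_i$), and by $I_1R_{i+1}\to J_1S_{i+1}$, $I_1R_{i+1}\to I'_1R'_{i+1}$,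 $I'_1R'_{i+1}\to J'_1S'_{i+1}$, $J_1S_{i+1}\to J'_1S'_{i+1}$ (restrictions of $\psi_{i+1},\rho_{i+1},\psi'_{i+1},\sigma_{i+1}$) are cartesian; (iv) for every $i\ge0$ the map $(R'_i)_{I'_0\text{-tor}}\oplus(S_i)_{J_0\text{-tor}}\to(S'_i)_{J'_0\text{-tor}}$, $(a,b)\mapsto\psi'_i(a)+\sigma_i(b)$, is surjective. Let $R:=R_0$. Then: (1) $\mathbf R$ is a preperfectoid tower arising from $(R,I_0)$ with first perfectoid pillar $I_1$; (2) if $\mathbf R',\mathbf S,\mathbf S'$ are perfectoid towers, then $\mathbf R$ is a perfectoid tower arising from $(R,I_0)$; (3) the tilt of $\mathbf R$ is the tower $\{{R'_i}^{s.\flat}\times_{{S'_i}^{s.\flat}}S_i^{s.\flat}\}_{i\ge0}$ (fibre products along the tilts of $\psi'$ and $\sigma$).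
   Context: Fix a prime $p$; rings are commutative with $1$. For a ring $A$, an ideal $I$ and an $A$-module $M$, $M_{I\text{-tor}}$ is the submodule of $x\in M$ such that for every $a\in I$ some $a^nx=0$; $\varphi_{I,A}\colon A_{I\text{-tor}}\to A/IA$ is inclusion followed by projection. $\varphi$ is absolute Frobenius. A tower of rings $\{R_i,t_i\}_{i\ge0}$ is a sequence of ring maps $R_0\xrightarrow{t_0}R_1\to\cdots$; morphisms of towers are compatible families of ring maps. For a ring $R$ and ideal $I_0$, write $\overline{R_i}=R_i/I_0R_i$, $\overline{t_i}$ the induced maps. A purely inseparable tower arising from $(R,I_0)$: (a) $R_0=R$, $p\in I_0$; (b) each $\overline{t_i}$ injective; (c) $\varphi(\overline{R_{i+1}})\subset\overline{t_i}(\overline{R_i})$; then $F_i\colon\overline{R_{i+1}}\to\overline{R_i}$ is the unique ring map with $\overline{t_i}\circ F_i=\varphi$. Conditions: (d) each $F_i$ surjective; (e) $I_0R_i$ lies in the Jacobson radical of $R_i$ for all $i$; (f) $I_0$ principal and a principal ideal $I_1\subset R_1$ (the first perfectoid pillar) with $I_1^p=I_0R_1$ and $\ker F_i=I_1\overline{R_{i+1}}$ for all $i$; (g) for all $i$, $I_0(R_i)_{I_0\text{-tor}}=0$ and a bijection $(F_i)_{\mathrm{tor}}\colon(R_{i+1})_{I_0\text{-tor}}\to(R_i)_{I_0\text{-tor}}$ with $\varphi_{I_0,R_i}\circ(F_i)_{\mathrm{tor}}=F_i\circ\varphi_{I_0,R_{i+1}}$. Preperfectoid: (a)–(d),(f),(g);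 perfectoid: additionally (e). Tilt: $R_i^{s.\flat}:=\varprojlim(\cdots\xrightarrow{F_{i+1}}\overline{R_{i+1}}\xrightarrow{F_i}\overline{R_i})$ with transition maps induced by the $\overline{t_j}$. For a morphism of towers $\alpha$ with $\alpha_0(I_0)\subset J_0$ between preperfectoid towers, $\alpha_i$ induce maps $\overline{R_j}\to\overline{S_j}$ compatible with Frobenius projections, hence maps $\alpha_i^{s.\flat}\colon R_i^{s.\flat}\to S_i^{s.\flat}$ (the tilt of $\alpha$). *)

(* Defs.v *)
(* Towers of commutative rings, ideals as Prop-valued
   predicates, quotients R_i / I_0 R_i encoded via congruence modulo the
   extended ideal. *)
From HB Require Import structures.
From mathcomp Require Import all_boot all_order all_algebra.
Set Implicit Arguments. Unset Strict Implicit. Unset Printing Implicit Defensive.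
Import GRing.Theory.
Local Open Scope ring_scope.

Section Ideals.
Variable R : comPzRingType.

Definition subsetR := R -> Prop.

Definition is_ideal (I : subsetR) : Prop :=
  [/\ I 0, (forall x y, I x -> I y -> I (x + y)) & (forall r x, I x -> I (r * x))].

Definition gen (A : subsetR) : subsetR := fun y =>
  exists s : seq (R * R), (forall q, q \in s -> A q.2) /\ y = \sum_(q <- s) q.1 * q.2.

Definition idmul (I J : subsetR) : subsetR :=
  gen (fun z => exists a b, [/\ I a, J b & z = a * b]).

Fixpoint idealX (I : subsetR) (n : nat) : subsetR :=
  match n with
  | 0 => gen (fun z => z = 1)
  | n'.+1 => idmul (idealX I n') I
  end.

Definition generates (f : R) (I : subsetR) : Prop :=
  forall x, I x <-> exists a, x = a * f.

Definition principal (I : subsetR) : Prop := exists f, generates f I.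

Definition maximal_ideal (M : subsetR) : Prop :=
  [/\ is_ideal M, ~ M 1 &
      forall N, is_ideal N -> (forall x, M x -> N x) -> ~ N 1 -> forall x, N x -> M x].

Definition jacobson (x : R) : Prop := forall M, maximal_ideal M -> M x.

End Ideals.

Definition ext (R S : comPzRingType) (f : R -> S) (I : subsetR R) : subsetR S :=
  gen (fun y => exists x, I x /\ y = f x).

(* torsion: M_{I-tor} for the R0-module M = Ri via T : R0 -> Ri *)
Definition tor (R0 Ri : comPzRingType) (T : R0 -> Ri) (I : subsetR R0) (x : Ri) : Prop :=
  forall a, I a -> exists n, T a ^+ n * x = 0.

Unset Implicit Arguments.
Section Towers.
Variable R : nat -> comPzRingType.
Variable t : forall i, {rmorphism R i -> R i.+1}.

Fixpoint tcomp (i : nat) : R 0%N -> R i :=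
  match i return R 0%N -> R i with
  | 0 => fun x => x
  | i'.+1 => fun x => t i' (tcomp i' x)
  end.

Fixpoint tup1 (i : nat) : R 1%N -> R i.+1 :=
  match i return R 1%N -> R i.+1 with
  | 0 => fun x => x
  | i'.+1 => fun x => t i'.+1 (tup1 i' x)
  end.

Variable p : nat.
Variable I0 : subsetR (R 0%N).
Variable I1 : subsetR (R 1%N).

Definition I0R (i : nat) : subsetR (R i) := ext (tcomp i) I0.

(* Fis i x y  <->  F_i(class of y) = class of x in R_i / I_0 R_i,
   i.e. t_i(x) = y^p modulo I_0 R_{i+1}. *)
Definition Fis (i : nat) (x : R i) (y : R i.+1) : Prop :=
  I0R i.+1 (t i x - y ^+ p).

Record preperfectoid : Prop := {
  pp_ideal : is_ideal I0;
  pp_p : I0 p%:R;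
  (* (b) the induced maps R_i/I_0R_i -> R_{i+1}/I_0R_{i+1} are injective *)
  pp_inj : forall i (x : R i), I0R i.+1 (t i x) -> I0R i x;
  (* (c) Frobenius of R_{i+1}/I_0 lands in the image of R_i/I_0 *)
  pp_frob : forall i (y : R i.+1), exists x : R i, Fis i x y;
  (* (d) F_i surjective *)
  pp_Fsurj : forall i (x : R i), exists y : R i.+1, Fis i x y;
  pp_I0princ : principal I0;
  pp_I1princ : principal I1;
  pp_I1pow : forall z, idealX I1 p z <-> I0R 1%N z;
  pp_ker : forall i (y : R i.+1),
      (exists x : R i, I0R i x /\ Fis i x y) <->
      (exists z, ext (tup1 i) I1 z /\ I0R i.+1 (y - z));
  pp_torkill : forall i a (x : R i), I0 a -> tor (tcomp i) I0 x -> tcomp i a * x = 0;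
  pp_Ftor : forall i, exists g : R i.+1 -> R i,
      [/\ forall y, tor (tcomp i.+1) I0 y -> tor (tcomp i) I0 (g y),
          (forall y y', tor (tcomp i.+1) I0 y -> tor (tcomp i.+1) I0 y' -> g y = g y' -> y = y'),
          (forall x, tor (tcomp i) I0 x -> exists y, tor (tcomp i.+1) I0 y /\ g y = x) &
          forall y, tor (tcomp i.+1) I0 y -> Fis i (g y) y]
}.

Definition perfectoid : Prop :=
  preperfectoid /\ forall i (x : R i), I0R i x -> jacobson x.

(* elements of the tilt R_i^{s.flat}: compatible sequences (x_j)_{j>=0} with
   x_j in R_{j+i} (representing its class in R_{j+i}/I_0R_{j+i}) and
   F_{j+i}(x_{j+1}) = x_j *)
Definition is_tilt (i : nat) (x : forall j, R (j + i)%N) : Prop :=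
  forall j, Fis (j + i)%N (x j) (x j.+1).

Definition tilt_eq (i : nat) (x y : forall j, R (j + i)%N) : Prop :=
  forall j, I0R (j + i)%N (x j - y j).

End Towers.

Definition tower_mor (R S : nat -> comPzRingType)
  (t : forall i, {rmorphism R i -> R i.+1}) (u : forall i, {rmorphism S i -> S i.+1})
  (a : forall i, {rmorphism R i -> S i}) : Prop :=
  forall i x, a i.+1 (t i x) = u i (a i x).

Definition tilt_map (R S : nat -> comPzRingType) (a : forall i, {rmorphism R i -> S i})
  (i : nat) (x : forall j, R (j + i)%N) : forall j, S (j + i)%N :=
  fun j => a (j + i)%N (x j).

Definition cartesian (R R' S S' : comPzRingType)
  (P : subsetR R) (A : subsetR R') (B : subsetR S) (C : subsetR S')
  (r : R -> R') (s : R -> S) (f : R' -> S') (g : S -> S') : Prop :=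
  [/\ (forall x, P x -> A (r x) /\ B (s x)),
      (forall a, A a -> C (f a)) /\ (forall b, B b -> C (g b)),
      (forall x, P x -> f (r x) = g (s x)),
      (forall x y, P x -> P y -> r x = r y -> s x = s y -> x = y) &
      (forall a b, A a -> B b -> f a = g b -> exists x, [/\ P x, r x = a & s x = b])].
Arguments cartesian {R R' S S'} P A B C r s f g.

(* Main.v *)
Require Import Defs.
From HB Require Import structures.
From mathcomp Require Import all_boot all_order all_algebra.
From mathcomp Require Import ring.
Import GRing.Theory.

Section IdealLemmas.
Local Open Scope ring_scope.
Variable R : comPzRingType.
Implicit Types (I A : subsetR R) (x y r : R).

Lemma id0 I : is_ideal I -> I 0. Proof. by case. Qed.
Lemma idD I x y : is_ideal I -> I x -> I y -> I (x + y). Proof. by case=> _ H _; apply: H. Qed.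
Lemma idM I r x : is_ideal I -> I x -> I (r * x). Proof. by case=> _ _ H; apply: H. Qed.
Lemma idMr I r x : is_ideal I -> I x -> I (x * r). Proof. by move=> H Hx; rewrite mulrC; apply: idM. Qed.
Lemma idN I x : is_ideal I -> I x -> I (- x).
Proof. by move=> H Hx; rewrite -mulN1r; apply: idM. Qed.
Lemma idB I x y : is_ideal I -> I x -> I y -> I (x - y).
Proof. by move=> H Hx Hy; apply: idD => //; apply: idN. Qed.
Lemma idBr I x y : is_ideal I -> I (x - y) -> I y -> I x.
Proof. by move=> H Hx Hy; rewrite -(subrK y x); apply: idD. Qed.
Lemma idBl I x y : is_ideal I -> I (x - y) -> I x -> I y.
Proof. by move=> H Hx Hy; rewrite -(opprK y) -(add0r (- - y)) -(subrr x) -addrA -opprD; apply: idB. Qed.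
Lemma idBB I w x y : is_ideal I -> I (w - x) -> I (w - y) -> I (y - x).
Proof. move=> H Hx Hy; have -> : y - x = (w - x) - (w - y) by ring.
by apply: idB. Qed.
Lemma idBB' I x y z : is_ideal I -> I (x - z) -> I (y - z) -> I (x - y).
Proof. move=> H Hx Hy; have -> : x - y = (x - z) - (y - z) by ring.
by apply: idB. Qed.
Lemma idXX I x y n : is_ideal I -> I (x - y) -> I (x ^+ n - y ^+ n).
Proof. by move=> H Hx; rewrite subrXX; apply: idMr. Qed.
Lemma id_eq I x y : x = y -> I x -> I y. Proof. by move=> ->. Qed.

Lemma id_sum I (T : eqType) (s : seq T) (F : T -> R) :
  is_ideal I -> (forall q, q \in s -> I (F q)) -> I (\sum_(q <- s) F q).
Proof.
move=> H; elim: s => [|a s IH] Hs; first by rewrite big_nil; apply: id0.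
rewrite big_cons; apply: idD => //; first by apply: Hs; rewrite mem_head.
by apply: IH => q Hq; apply: Hs; rewrite in_cons Hq orbT.
Qed.

Lemma mult_ideal (m : R) : is_ideal (fun z => exists c, z = c * m).
Proof.
split; first by exists 0; rewrite mul0r.
- by move=> x y [a ->] [b ->]; exists (a + b); rewrite mulrDl.
- by move=> r x [a ->]; exists (r * a); rewrite mulrA.
Qed.

Lemma gen_ideal A : is_ideal (gen A).
Proof.
split.
- by exists [::]; split => //; rewrite big_nil.
- move=> x y [s [Hs ->]] [s' [Hs' ->]]; exists (s ++ s'); split; last by rewrite big_cat.
  by move=> q; rewrite mem_cat => /orP[]; [apply: Hs|apply: Hs'].
- move=> r x [s [Hs ->]]; exists [seq (r * q.1, q.2) | q <- s]; split.
    move=> q /mapP[q' Hq' ->] /=. apply: Hs. exact Hq'.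
  by rewrite big_map mulr_sumr; apply: eq_bigr => q _; rewrite mulrA.
Qed.

Lemma gen_in A x : A x -> gen A x.
Proof. by move=> Hx; exists [:: (1, x)]; split; [move=> q; rewrite inE => /eqP -> | rewrite big_seq1 mul1r]. Qed.

Lemma gen_sub A I : is_ideal I -> (forall z, A z -> I z) -> forall z, gen A z -> I z.
Proof.
move=> HI HA z [s [Hs ->]]; apply: id_sum => // q Hq.
by apply: idM => //; apply: HA; apply: Hs.
Qed.

Lemma gen_mult A (m : R) : (forall z, A z -> exists c, z = c * m) -> forall z, gen A z -> exists c, z = c * m.
Proof. by move=> H; apply: gen_sub => //; apply: mult_ideal. Qed.

Lemma generates_ideal (f : R) I : generates f I -> is_ideal I.
Proof.
move=> H; have [H0 HD HM] := mult_ideal f.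
by split; [apply/H | move=> x y /H Hx /H Hy; apply/H; apply: HD | move=> r x /H Hx; apply/H; apply: HM].
Qed.

Lemma idealX_ideal I n : is_ideal (idealX I n).
Proof. by case: n => [|n] /=; apply: gen_ideal. Qed.

Lemma idealX_mult I (f : R) n : (forall z, I z -> exists c, z = c * f) ->
  forall z, idealX I n z -> exists c, z = c * f ^+ n.
Proof.
move=> HI; elim: n => [|n IH] z /=.
  by apply: gen_mult => z' ->; exists 1; rewrite expr0 mulr1.
apply: gen_mult => z' [a [b [Ha Hb ->]]].
have [c ->] := IH _ Ha; have [d ->] := HI _ Hb.
by exists (c * d); rewrite exprSr; rewrite -!mulrA; congr (_ * _); rewrite mulrCA.
Qed.

Lemma idealX_pow I (f : R) n : I f -> idealX I n (f ^+ n).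
Proof.
move=> Hf; elim: n => [|n IH] /=; first by apply: gen_in; rewrite expr0.
by apply: gen_in; exists (f ^+ n), f; split => //; rewrite exprSr.
Qed.

End IdealLemmas.

Section ExtLemmas.
Local Open Scope ring_scope.
Variables (R S : comPzRingType) (f : R -> S).
Lemma ext_in I x : I x -> ext f I (f x).
Proof. by move=> Hx; apply: gen_in; exists x. Qed.
Lemma ext_ideal I : is_ideal (ext f I). Proof. exact: gen_ideal. Qed.
Lemma ext_gen g I : (forall a b, f (a * b) = f a * f b) -> generates g I ->
  forall z, ext f I z <-> exists c, z = c * f g.
Proof.
move=> fM Hg z; split.
  apply: gen_mult => _ [x [/Hg [a ->] ->]]; by exists (f a); rewrite fM.
move=> [c ->]; apply: idM; first exact: ext_ideal.
by apply: ext_in; apply/Hg; exists 1; rewrite mul1r.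
Qed.
End ExtLemmas.
Arguments ext_gen {R S f g I}.

Section Binom.
Local Open Scope ring_scope.
Variable R : comPzRingType.
Lemma binom_ideal (I : subsetR R) (p : nat) x y : prime p -> is_ideal I -> I p%:R ->
  I ((x + y) ^+ p - x ^+ p - y ^+ p).
Proof.
move=> pp HI Hp; have p_gt0 := prime_gt0 pp.
case: p pp p_gt0 Hp => // n pp _ Hp.
rewrite exprDn big_ord_recl big_ord_recr /= subn0 expr0 mulr1 bin0 mulr1n.
rewrite subnn expr0 mul1r binn mulr1n.
set S := (\sum_(i < n) _).
have -> : x ^+ n.+1 + (S + y ^+ bump 0 n) - x ^+ n.+1 - y ^+ n.+1 = S.
  by rewrite /bump /= add1n; ring.
apply: id_sum => // j _.
rewrite -mulr_natr; apply: idM => //.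
have Hd : (n.+1 %| 'C(n.+1, bump 0 j))%N.
  by apply: prime_dvd_bin => //=; rewrite /bump /= add1n ltnS ltn_ord.
by rewrite -(divnK Hd) natrM; apply: idM.
Qed.
End Binom.

Section TowerLemmas.
Local Open Scope ring_scope.
Variables (R : nat -> comPzRingType) (t : forall i, {rmorphism R i -> R i.+1}).

Lemma tcompM i x y : tcomp R t i (x * y) = tcomp R t i x * tcomp R t i y.
Proof. by elim: i => //= i ->; rewrite rmorphM. Qed.
Lemma tcompD i x y : tcomp R t i (x + y) = tcomp R t i x + tcomp R t i y.
Proof. by elim: i => //= i ->; rewrite rmorphD. Qed.
Lemma tcompB i x y : tcomp R t i (x - y) = tcomp R t i x - tcomp R t i y.
Proof. by elim: i => //= i ->; rewrite rmorphB. Qed.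
Lemma tcomp1 i : tcomp R t i 1 = 1.
Proof. by elim: i => //= i ->; rewrite rmorph1. Qed.
Lemma tcomp0 i : tcomp R t i 0 = 0.
Proof. by elim: i => //= i ->; rewrite rmorph0. Qed.
Lemma tcompX i x n : tcomp R t i (x ^+ n) = tcomp R t i x ^+ n.
Proof. by elim: i => //= i ->; rewrite rmorphXn. Qed.
Lemma tcomp_nat i n : tcomp R t i n%:R = n%:R.
Proof. by elim: i => //= i ->; rewrite rmorph_nat. Qed.

Lemma tup1M i x y : tup1 R t i (x * y) = tup1 R t i x * tup1 R t i y.
Proof. by elim: i => //= i ->; rewrite rmorphM. Qed.
Lemma tup1D i x y : tup1 R t i (x + y) = tup1 R t i x + tup1 R t i y.
Proof. by elim: i => //= i ->; rewrite rmorphD. Qed.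
Lemma tup1X i x n : tup1 R t i (x ^+ n) = tup1 R t i x ^+ n.
Proof. by elim: i => //= i ->; rewrite rmorphXn. Qed.

Lemma tcompS i x : tcomp R t i.+1 x = tup1 R t i (t 0%N x).
Proof. by elim: i => //= i ->. Qed.

Variables (p : nat) (I0 : subsetR (R 0%N)) (I1 : subsetR (R 1%N)).
Hypothesis H : preperfectoid R t p I0 I1.

Lemma I0R_ideal i : is_ideal (I0R R t I0 i). Proof. exact: ext_ideal. Qed.

Lemma I0R_in i a : I0 a -> I0R R t I0 i (tcomp R t i a).
Proof. exact: ext_in. Qed.

Lemma I0R_t i z : I0R R t I0 i z -> I0R R t I0 i.+1 (t i z).
Proof.
move=> [s [Hs ->]]; rewrite rmorph_sum; apply: id_sum; first exact: I0R_ideal.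
move=> q Hq; rewrite rmorphM; apply: idM; first exact: I0R_ideal.
have [a [Ha ->]] := Hs q Hq; exact (I0R_in (i.+1) _ Ha).
Qed.

Lemma I0R_gen f0 i : generates f0 I0 ->
  forall z, I0R R t I0 i z <-> exists c, z = c * tcomp R t i f0.
Proof. move=> Hf; apply: ext_gen => //; exact: tcompM. Qed.

Lemma I0R_p i : I0R R t I0 i p%:R.
Proof. by rewrite -(tcomp_nat i); apply: I0R_in; apply: (pp_p _ _ _ _ _ H). Qed.

Lemma tor_iff i (x : R i) : tor (tcomp R t i) I0 x <-> forall a, I0 a -> tcomp R t i a * x = 0.
Proof.
split; first by move=> Hx a Ha; apply: (pp_torkill _ _ _ _ _ H).
by move=> Hx a Ha; exists 1%N; rewrite expr1; apply: Hx.
Qed.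

Lemma tor0 i : tor (tcomp R t i) I0 (0 : R i).
Proof. by apply/tor_iff => a _; rewrite mulr0. Qed.
Lemma torB i (x y : R i) : tor (tcomp R t i) I0 x -> tor (tcomp R t i) I0 y ->
  tor (tcomp R t i) I0 (x - y).
Proof. by move=> /tor_iff Hx /tor_iff Hy; apply/tor_iff => a Ha; rewrite mulrBr Hx // Hy // subr0. Qed.
Lemma torD i (x y : R i) : tor (tcomp R t i) I0 x -> tor (tcomp R t i) I0 y ->
  tor (tcomp R t i) I0 (x + y).
Proof. by move=> /tor_iff Hx /tor_iff Hy; apply/tor_iff => a Ha; rewrite mulrDr Hx // Hy // addr0. Qed.

Lemma tor_I0R i (x : R i) : tor (tcomp R t i) I0 x -> I0R R t I0 i x -> x = 0.
Proof.
have [f0 Hf0] := pp_I0princ _ _ _ _ _ H.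
have Hf : I0 f0 by apply/Hf0; exists 1; rewrite mul1r.
move=> Ht /(I0R_gen _ i Hf0) [c Hc].
have [n Hn] := Ht f0 Hf.
have Hc' : tor (tcomp R t i) I0 c.
  move=> a /Hf0 [d ->]; exists n.+1; rewrite tcompM exprMn -mulrA [tcomp R t i f0 ^+ _]exprSr -mulrA.
  by rewrite (mulrC _ c) -Hc Hn mulr0.
by rewrite Hc mulrC; apply: (pp_torkill _ _ _ _ _ H).
Qed.

Lemma F_unique i (x1 x2 : R i) (y : R i.+1) :
  tor (tcomp R t i) I0 x1 -> tor (tcomp R t i) I0 x2 ->
  Fis R t p I0 i x1 y -> Fis R t p I0 i x2 y -> x1 = x2.
Proof.
move=> T1 T2 F1 F2; apply/eqP; rewrite -subr_eq0; apply/eqP.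
apply: tor_I0R; first exact: torB.
apply: (pp_inj _ _ _ _ _ H); rewrite rmorphB.
have -> : t i x1 - t i x2 = (t i x1 - y ^+ p) - (t i x2 - y ^+ p) by rewrite opprB addrA subrK.
by apply: idB => //; apply: I0R_ideal.
Qed.

Lemma Fis0 i (y : R i.+1) : Fis R t p I0 i 0 y <-> I0R R t I0 i.+1 (y ^+ p).
Proof.
rewrite /Fis rmorph0 sub0r; split; first by move=> Hy; rewrite -(opprK (y ^+ p)); apply: idN => //; apply: I0R_ideal.
by move=> Hy; apply: idN => //; apply: I0R_ideal.
Qed.

Lemma Fis_I0R i x y : I0R R t I0 i x -> Fis R t p I0 i x y -> I0R R t I0 i.+1 (y ^+ p).
Proof. move=> Hx HF; apply: idBl HF _; [exact: I0R_ideal | exact: I0R_t]. Qed.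

Lemma ker_pow i z : ext (tup1 R t i) I1 z -> I0R R t I0 i.+1 (z ^+ p).
Proof.
move=> Hz.
have H0 : I0R R t I0 i.+1 (z - z) by rewrite subrr; apply: id0; apply: I0R_ideal.
have [x [Hx HF]] := (pp_ker _ _ _ _ _ H i z).2 (ex_intro _ z (conj Hz H0)).
exact: Fis_I0R HF.
Qed.
End TowerLemmas.

Lemma mor_tcomp (R S : nat -> comPzRingType) t u a : tower_mor R S t u a ->
  forall i x, a i (tcomp R t i x) = tcomp S u i (a 0%N x).
Proof. by move=> Ha; elim => //= i IH x; rewrite Ha IH. Qed.

Lemma mor_tup1 (R S : nat -> comPzRingType) t u a : tower_mor R S t u a ->
  forall i x, a i.+1 (tup1 R t i x) = tup1 S u i (a 1%N x).
Proof. by move=> Ha; elim => //= i IH x; rewrite Ha IH. Qed.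
Arguments mor_tcomp {R S t u a}.
Arguments mor_tup1 {R S t u a}.

From mathcomp Require classical_sets.
From Stdlib Require Import Classical.

Section Jac.
Local Open Scope ring_scope.
Variable R : comPzRingType.

Lemma jac_unit (z : R) : jacobson z -> exists w, (1 - z) * w = 1.
Proof.
move=> Hz; apply: NNPP => Hno.
pose J := fun x : R => exists c, x = c * (1 - z).
have HJ : is_ideal J by apply: mult_ideal.
have J1 : ~ J 1.
  by move=> [c Hc]; apply: Hno; exists c; rewrite mulrC -Hc.
pose P := fun X : subsetR R => (forall x, ~ X x) \/ [/\ is_ideal X, (forall x, J x -> X x) & ~ X 1].
have [A [PA Amax]] : exists A, P A /\ forall B, classical_sets.proper A B -> ~ P B.
  apply: classical_sets.Zorn_bigcup => F FP Ftot.
  case: (classic (exists X0, F X0 /\ exists x, X0 x)) => [[X0 [FX0 [x0 Hx0]]]|Hne]; last first.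
    by left => x [X FX HX]; apply: Hne; exists X; split => //; exists x.
  have Fid : forall X x, F X -> X x -> [/\ is_ideal X, (forall x, J x -> X x) & ~ X 1].
    by move=> X x FX Xx; case: (FP X FX) => // /(_ x).
  have [I0X0 JX0 _] := Fid _ _ FX0 Hx0.
  right; split.
  - split.
    + by exists X0 => //; apply: id0.
    + move=> x y [X1 FX1 H1] [X2 FX2 H2].
      have [I1 _ _] := Fid _ _ FX1 H1; have [I2 _ _] := Fid _ _ FX2 H2.
      case: (Ftot _ _ FX1 FX2) => Hs.
        by exists X2 => //; apply: idD => //; apply: Hs.
      by exists X1 => //; apply: idD => //; apply: Hs.
    + move=> r x [X FX HX]; have [IX _ _] := Fid _ _ FX HX.
      by exists X => //; apply: idM.
  - by move=> x Jx; exists X0 => //; apply: JX0.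
  - by move=> [X FX HX]; have [_ _ ] := Fid _ _ FX HX; apply.
have [IA JA A1] : [/\ is_ideal A, (forall x, J x -> A x) & ~ A 1].
    case: PA => // Hemp; exfalso; apply: (Amax J); last by right; split.
    split; first by move=> x /Hemp.
    by move=> HJA; apply: (Hemp 0); apply: HJA; apply: id0.
have Amx : maximal_ideal A.
  split => // N IN AN N1 x Nx; apply: NNPP => Ax.
  apply: (Amax N); last by right; split => // y Jy; apply: AN; apply: JA.
  by split => // NA; apply: Ax; apply: NA.
apply: A1; rewrite -(subrK z 1); apply: idD => //; last by apply: Hz.
by apply: JA; exists 1; rewrite mul1r.
Qed.
End Jac.

Lemma cart_memb (R R' S S' : comPzRingType) P A B C (r : R -> R') (s : R -> S) (f : R' -> S') (g : S -> S') :
  cartesian P A B C r s f g -> (forall x, f (r x) = g (s x)) ->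
  (forall x y, r x = r y -> s x = s y -> x = y) -> forall z, A (r z) -> B (s z) -> P z.
Proof.
case=> _ _ _ _ H5 Hc Hi z Ha Hb; have [x [Px rx sx]] := H5 _ _ Ha Hb (Hc z).
by rewrite -(Hi _ _ rx sx).
Qed.

Lemma cart_fst (R R' S S' : comPzRingType) P A B C (r : R -> R') (s : R -> S) (f : R' -> S') (g : S -> S') :
  cartesian P A B C r s f g -> forall z, P z -> A (r z) /\ B (s z).
Proof. by case. Qed.
Lemma cart_f (R R' S S' : comPzRingType) P A B C (r : R -> R') (s : R -> S) (f : R' -> S') (g : S -> S') :
  cartesian P A B C r s f g -> forall a, A a -> C (f a).
Proof. by case=> _ []. Qed.
Lemma cart_g (R R' S S' : comPzRingType) P A B C (r : R -> R') (s : R -> S) (f : R' -> S') (g : S -> S') :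
  cartesian P A B C r s f g -> forall b, B b -> C (g b).
Proof. by case=> _ []. Qed.

Lemma mor_tor (R S : nat -> comPzRingType) t u a (Ha : tower_mor R S t u a)
  (I0 : subsetR (R 0%N)) (J0 : subsetR (S 0%N)) (f : R 0%N) :
  I0 f -> (forall b, J0 b -> exists c, b = (c * a 0%N f)%R) ->
  forall i x, tor (tcomp R t i) I0 x -> tor (tcomp S u i) J0 (a i x).
Proof.
move=> If HJ i x Hx b /HJ [c ->]; have [n Hn] := Hx f If.
exists n; rewrite tcompM exprMn -GRing.mulrA -(mor_tcomp Ha) -GRing.rmorphXn -GRing.rmorphM Hn.
by rewrite GRing.rmorph0 GRing.mulr0.
Qed.

Lemma I0R_sub_I1 (R : nat -> comPzRingType) t p I0 I1 (H : preperfectoid R t p I0 I1) :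
  (0 < p)%N -> forall i e, I0R R t I0 i.+1 e -> ext (tup1 R t i) I1 e.
Proof.
move=> p_gt0 i e.
have [f Hf] := pp_I0princ _ _ _ _ _ H; have [g Hg] := pp_I1princ _ _ _ _ _ H.
have [al Hal] : exists al, t 0%N f = (al * g ^+ p)%R.
  apply: (idealX_mult _ I1); first by move=> z /Hg.
  by apply/(pp_I1pow _ _ _ _ _ H); apply: (I0R_in R t I0 1%N); apply/Hf; exists 1%R; rewrite GRing.mul1r.
move/(I0R_gen _ _ _ _ (i.+1) Hf) => [c ->].
rewrite tcompS Hal tup1M tup1X; case: p p_gt0 {Hal H} => // n _.
rewrite GRing.exprSr GRing.mulrA GRing.mulrA; apply: idM; first exact: ext_ideal.
by apply: ext_in; apply/Hg; exists 1%R; rewrite GRing.mul1r.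
Qed.
Arguments cart_memb {R R' S S' P A B C r s f g}.
Arguments cart_fst {R R' S S' P A B C r s f g}.
Arguments cart_f {R R' S S' P A B C r s f g}.
Arguments cart_g {R R' S S' P A B C r s f g}.
Arguments mor_tor {R S t u a} Ha {I0 J0 f}.

From Stdlib Require Import ClassicalEpsilon.

Section Main.
Set Implicit Arguments.
Local Open Scope ring_scope.
Variables (p : nat) (p_prime : prime p) (R' S S' : nat -> comPzRingType)
  (t' : forall i, {rmorphism R' i -> R' i.+1})
  (u : forall i, {rmorphism S i -> S i.+1})
  (u' : forall i, {rmorphism S' i -> S' i.+1})
  (I'0 : subsetR (R' 0%N)) (J0 : subsetR (S 0%N)) (J'0 : subsetR (S' 0%N))
  (I'1 : subsetR (R' 1%N)) (J1 : subsetR (S 1%N)) (J'1 : subsetR (S' 1%N)).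
Hypotheses (HR' : preperfectoid R' t' p I'0 I'1)
  (HS : preperfectoid S u p J0 J1)
  (HS' : preperfectoid S' u' p J'0 J'1).
Variables (psi' : forall i, {rmorphism R' i -> S' i})
  (sigma : forall i, {rmorphism S i -> S' i}).
Hypotheses (Hpsi' : tower_mor R' S' t' u' psi') (Hsigma : tower_mor S S' u u' sigma)
  (Hext0a : forall z, ext (psi' 0%N) I'0 z <-> J'0 z)
  (Hext0b : forall z, ext (sigma 0%N) J0 z <-> J'0 z)
  (Hext1a : forall z, ext (psi' 1%N) I'1 z <-> J'1 z)
  (Hext1b : forall z, ext (sigma 1%N) J1 z <-> J'1 z)
  (Hsigma_surj : forall i (y : S' i), exists x : S i, sigma i x = y).
Variables (R : nat -> comPzRingType)
  (t : forall i, {rmorphism R i -> R i.+1})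
  (rho : forall i, {rmorphism R i -> R' i})
  (psi : forall i, {rmorphism R i -> S i}).
Hypotheses (Hrho : tower_mor R R' t t' rho) (Hpsi : tower_mor R S t u psi)
  (Hcomm : forall i x, psi' i (rho i x) = sigma i (psi i x))
  (Hfib_inj : forall i (x y : R i), rho i x = rho i y -> psi i x = psi i y -> x = y)
  (Hfib_surj : forall i (a : R' i) (b : S i), psi' i a = sigma i b ->
      exists x : R i, rho i x = a /\ psi i x = b).
Variables (I0 : subsetR (R 0%N)) (I1 : subsetR (R 1%N)).
Hypotheses (HI0 : forall x, I0 x <-> I'0 (rho 0%N x) /\ J0 (psi 0%N x))
  (HI1 : forall x, I1 x <-> I'1 (rho 1%N x) /\ J1 (psi 1%N x))
  (Hf0 : exists f0 : R 0%N,
      [/\ generates f0 I0, generates (rho 0%N f0) I'0 & generates (psi 0%N f0) J0])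
  (Hf1 : exists f1 : R 1%N,
      [/\ generates f1 I1, generates (rho 1%N f1) I'1 & generates (psi 1%N f1) J1])
  (Hcart0 : forall i,
      cartesian (I0R R t I0 i) (I0R R' t' I'0 i) (I0R S u J0 i) (I0R S' u' J'0 i)
                (rho i) (psi i) (psi' i) (sigma i))
  (Hcart1 : forall i,
      cartesian (ext (tup1 R t i) I1) (ext (tup1 R' t' i) I'1)
                (ext (tup1 S u i) J1) (ext (tup1 S' u' i) J'1)
                (rho i.+1) (psi i.+1) (psi' i.+1) (sigma i.+1))
  (Htor : forall i (c : S' i), tor (tcomp S' u' i) J'0 c ->
      exists (a : R' i) (b : S i),
        [/\ tor (tcomp R' t' i) I'0 a, tor (tcomp S u i) J0 b & (psi' i a + sigma i b)%R = c]).

Local Notation IR i := (I0R R t I0 i).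
Local Notation IR' i := (I0R R' t' I'0 i).
Local Notation IS i := (I0R S u J0 i).
Local Notation IS' i := (I0R S' u' J'0 i).
Local Notation TR i := (tor (tcomp R t i) I0).
Local Notation TR' i := (tor (tcomp R' t' i) I'0).
Local Notation TS i := (tor (tcomp S u i) J0).
Local Notation TS' i := (tor (tcomp S' u' i) J'0).

Lemma p_gt0 : (0 < p)%N. Proof. exact: prime_gt0. Qed.

Lemma memb0 i (z : R i) : IR' i (rho i z) -> IS i (psi i z) -> IR i z.
Proof. exact: (cart_memb (Hcart0 i) (Hcomm i) (Hfib_inj i)). Qed.
Lemma fst0 i (z : R i) : IR i z -> IR' i (rho i z) /\ IS i (psi i z).
Proof. exact: (cart_fst (Hcart0 i)). Qed.
Lemma psi'0 i a : IR' i a -> IS' i (psi' i a). Proof. exact: (cart_f (Hcart0 i)). Qed.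
Lemma sig0 i b : IS i b -> IS' i (sigma i b). Proof. exact: (cart_g (Hcart0 i)). Qed.
Lemma memb1 i (z : R i.+1) : ext (tup1 R' t' i) I'1 (rho _ z) -> ext (tup1 S u i) J1 (psi _ z) ->
  ext (tup1 R t i) I1 z.
Proof. exact: (cart_memb (Hcart1 i) (Hcomm _) (Hfib_inj _)). Qed.
Lemma fst1 i (z : R i.+1) : ext (tup1 R t i) I1 z ->
  ext (tup1 R' t' i) I'1 (rho _ z) /\ ext (tup1 S u i) J1 (psi _ z).
Proof. exact: (cart_fst (Hcart1 i)). Qed.

Definition f0 : R 0%N := proj1_sig (constructive_indefinite_description _ Hf0).
Lemma f0P : [/\ generates f0 I0, generates (rho 0%N f0) I'0 & generates (psi 0%N f0) J0].
Proof. exact: (proj2_sig (constructive_indefinite_description _ Hf0)). Qed.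
Definition f1 : R 1%N := proj1_sig (constructive_indefinite_description _ Hf1).
Lemma f1P : [/\ generates f1 I1, generates (rho 1%N f1) I'1 & generates (psi 1%N f1) J1].
Proof. exact: (proj2_sig (constructive_indefinite_description _ Hf1)). Qed.

Lemma gen_self (T : comPzRingType) (g : T) I : generates g I -> I g.
Proof. by move=> H; apply/H; exists 1; rewrite mul1r. Qed.
Arguments gen_self {T g I}.

Lemma genJ'0 : generates (sigma 0%N (psi 0%N f0)) J'0.
Proof.
have [_ _ Hg] := f0P.
move=> z; rewrite -Hext0b; apply: ext_gen => // a b; exact: rmorphM.
Qed.
Lemma genJ'0a : generates (psi' 0%N (rho 0%N f0)) J'0.
Proof. by rewrite Hcomm; exact: genJ'0. Qed.
Lemma genJ'1 : generates (sigma 1%N (psi 1%N f1)) J'1.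
Proof.
have [_ _ Hg] := f1P.
move=> z; rewrite -Hext1b; apply: ext_gen => // a b; exact: rmorphM.
Qed.

Lemma sig_onto0 i z : IS' i z -> exists e, IS i e /\ sigma i e = z.
Proof.
move/(I0R_gen _ _ _ _ i genJ'0) => [c ->].
have [c0 <-] := Hsigma_surj i c.
exists (c0 * tcomp S u i (psi 0%N f0)); split.
  apply: idM; [exact: I0R_ideal | apply: I0R_in].
  by have [_ _ H] := f0P; exact: gen_self H.
by rewrite rmorphM (mor_tcomp Hsigma).
Qed.

Lemma sig_onto1 i z : ext (tup1 S' u' i) J'1 z -> exists e, ext (tup1 S u i) J1 e /\ sigma i.+1 e = z.
Proof.
have Hg := genJ'1.
move/(ext_gen (tup1M _ _ i) Hg) => [c ->].
have [c0 <-] := Hsigma_surj i.+1 c.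
exists (c0 * tup1 S u i (psi 1%N f1)); split.
  apply: idM; first exact: ext_ideal.
  by apply: ext_in; have [_ _ H] := f1P; exact: gen_self H.
by rewrite rmorphM (mor_tup1 Hsigma).
Qed.


Lemma tor_rho i (x : R i) : TR i x -> TR' i (rho i x).
Proof.
have [G0 G0' _] := f0P.
apply: (mor_tor Hrho (gen_self G0)) => b /G0' //.
Qed.
Lemma tor_psi i (x : R i) : TR i x -> TS i (psi i x).
Proof.
have [G0 _ G0s] := f0P.
apply: (mor_tor Hpsi (gen_self G0)) => b /G0s //.
Qed.
Lemma tor_psi' i (x : R' i) : TR' i x -> TS' i (psi' i x).
Proof.
have [_ G0' _] := f0P.
apply: (mor_tor Hpsi' (gen_self G0')) => b /genJ'0a //.
Qed.
Lemma tor_sig i (x : S i) : TS i x -> TS' i (sigma i x).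
Proof.
have [_ _ G0s] := f0P.
apply: (mor_tor Hsigma (gen_self G0s)) => b /genJ'0 //.
Qed.

Lemma tor_glue i (x : R i) : TR' i (rho i x) -> TS i (psi i x) -> TR i x.
Proof.
move=> H1 H2 a Ha; exists 1%N; rewrite expr1; apply: Hfib_inj; rewrite !rmorph0 rmorphM.
  by rewrite (mor_tcomp Hrho); apply: (pp_torkill _ _ _ _ _ HR') => //; case: (HI0 a).1.
by rewrite (mor_tcomp Hpsi); apply: (pp_torkill _ _ _ _ _ HS) => //; case: (HI0 a).1.
Qed.

Lemma P_torkill i a (x : R i) : I0 a -> TR i x -> tcomp R t i a * x = 0.
Proof.
move=> Ha Hx; apply: Hfib_inj; rewrite !rmorph0 rmorphM.
  rewrite (mor_tcomp Hrho); apply: (pp_torkill _ _ _ _ _ HR'); last exact: tor_rho.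
  by case: (HI0 a).1.
rewrite (mor_tcomp Hpsi); apply: (pp_torkill _ _ _ _ _ HS); last exact: tor_psi.
by case: (HI0 a).1.
Qed.

Lemma P_inj i (x : R i) : IR i.+1 (t i x) -> IR i x.
Proof.
move=> /fst0 [H1 H2]; apply: memb0.
  by apply: (pp_inj _ _ _ _ _ HR'); rewrite -Hrho.
by apply: (pp_inj _ _ _ _ _ HS); rewrite -Hpsi.
Qed.

Lemma map_Fis' i (x : R' i) (y : R' i.+1) : Fis R' t' p I'0 i x y -> Fis S' u' p J'0 i (psi' i x) (psi' _ y).
Proof. by move/psi'0; rewrite /Fis rmorphB rmorphXn Hpsi'. Qed.
Lemma map_Fis_sig i (x : S i) (y : S i.+1) : Fis S u p J0 i x y -> Fis S' u' p J'0 i (sigma i x) (sigma _ y).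
Proof. by move/sig0; rewrite /Fis rmorphB rmorphXn Hsigma. Qed.

Lemma P_frob i (y : R i.+1) : exists x : R i, Fis R t p I0 i x y.
Proof.
have [a Ha] := pp_frob _ _ _ _ _ HR' i (rho _ y).
have [b Hb] := pp_frob _ _ _ _ _ HS i (psi _ y).
have Hd : IS' i (psi' i a - sigma i b).
  apply: (pp_inj _ _ _ _ _ HS'); rewrite rmorphB.
  have := map_Fis' Ha; have := map_Fis_sig Hb; rewrite /Fis Hcomm => H1 H2.
  by apply: idBB' H2 H1; apply: I0R_ideal.
have [e [He Hse]] := sig_onto0 Hd.
have [x [Hrx Hpx]] : exists x, rho i x = a /\ psi i x = b + e.
  by apply: Hfib_surj; rewrite rmorphD Hse addrC subrK.
exists x; apply: memb0; rewrite rmorphB rmorphXn.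
  by rewrite Hrho Hrx.
rewrite Hpsi Hpx rmorphD addrAC; apply: idD => //; first exact: I0R_ideal.
exact: I0R_t.
Qed.

Lemma P_Fsurj i (x : R i) : exists y, Fis R t p I0 i x y.
Proof.
have [a Ha] := pp_Fsurj _ _ _ _ _ HR' i (rho i x).
have [b Hb] := pp_Fsurj _ _ _ _ _ HS i (psi i x).
set c := psi' _ a - sigma _ b.
have IdS' : is_ideal (IS' i.+1) by apply: I0R_ideal.
have IdS : is_ideal (IS i.+1) by apply: I0R_ideal.
have Hc : IS' i.+1 (c ^+ p).
  have H1 : IS' i.+1 (sigma _ b ^+ p - psi' _ a ^+ p).
    have := map_Fis' Ha; have := map_Fis_sig Hb; rewrite /Fis => Hs Hp.
    rewrite Hcomm in Hp; exact: idBB Hp Hs.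
  have B := binom_ideal _ _ _ c (sigma _ b) p_prime IdS' (I0R_p _ _ _ _ _ HS' i.+1).
  have Ec : c + sigma _ b = psi' _ a by rewrite /c subrK.
  have -> : c ^+ p = - (sigma _ b ^+ p - (c + sigma _ b) ^+ p) - ((c + sigma _ b) ^+ p - c ^+ p - sigma _ b ^+ p) by ring.
  rewrite Ec in B *; apply: (idB _ _ _ _ IdS') => //; exact: (idN _ _ _ IdS').
have H0' : IS' i 0 by apply: id0; apply: I0R_ideal.
have [z [Hz Hcz]] := (pp_ker _ _ _ _ _ HS' i c).1 (ex_intro _ 0 (conj H0' ((Fis0 _ _ _ _ _ _).2 Hc))).
have [e1 [He1 Hse1]] := sig_onto1 Hz.
have [e0 [He0 Hse0]] := sig_onto0 Hcz.
have He1p : IS i.+1 (e1 ^+ p) := ker_pow _ _ _ _ _ HS _ _ He1.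
have [y [Hry Hpy]] : exists y, rho _ y = a /\ psi _ y = b + (e1 + e0).
  apply: Hfib_surj; rewrite rmorphD rmorphD Hse1 Hse0 [z + _]addrC subrK /c.
  by rewrite addrC subrK.
exists y; apply: memb0; rewrite rmorphB rmorphXn.
  by rewrite Hrho Hry.
rewrite Hpsi Hpy.
have K : IS i.+1 ((b + (e1 + e0)) ^+ p - b ^+ p).
  have K1 : IS i.+1 ((b + e1 + e0) ^+ p - (b + e1) ^+ p).
    by apply: idXX => //; have -> : b + e1 + e0 - (b + e1) = e0 by ring.
  have K2 := binom_ideal _ _ _ b e1 p_prime IdS (I0R_p _ _ _ _ _ HS i.+1).
  have -> : (b + (e1 + e0)) ^+ p - b ^+ p =
     ((b + e1 + e0) ^+ p - (b + e1) ^+ p) + ((b + e1) ^+ p - b ^+ p - e1 ^+ p) + e1 ^+ p.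
    by rewrite addrA; ring.
  by apply: idD => //; apply: idD.
exact: idBB' Hb K.
Qed.

Lemma f1p_in : IR 1 (f1 ^+ p).
Proof.
have [_ G1' G1s] := f1P.
apply: memb0; rewrite rmorphXn.
  by apply/(pp_I1pow _ _ _ _ _ HR'); apply: idealX_pow; exact: gen_self G1'.
by apply/(pp_I1pow _ _ _ _ _ HS); apply: idealX_pow; exact: gen_self G1s.
Qed.

Lemma tf0 : exists c, t 0%N f0 = c * f1 ^+ p.
Proof.
have [G0 G0' G0s] := f0P; have [G1 G1' G1s] := f1P.
have [al' Hal'] : exists al', t' 0%N (rho 0%N f0) = al' * rho 1%N f1 ^+ p.
  apply: (idealX_mult _ I'1); first by move=> z /G1'.
  apply/(pp_I1pow _ _ _ _ _ HR'); exact: (I0R_in _ _ _ 1%N _ (gen_self G0')).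
have [al Hal] : exists al, u 0%N (psi 0%N f0) = al * psi 1%N f1 ^+ p.
  apply: (idealX_mult _ J1); first by move=> z /G1s.
  apply/(pp_I1pow _ _ _ _ _ HS); exact: (I0R_in _ _ _ 1%N _ (gen_self G0s)).
set d := psi' 1%N al' - sigma 1%N al.
have E1 : psi' 1%N al' * sigma 1%N (psi 1%N f1) ^+ p = u' 0%N (psi' 0%N (rho 0%N f0)).
  by rewrite -Hcomm -rmorphXn -rmorphM -Hal' Hpsi'.
have E2 : sigma 1%N al * sigma 1%N (psi 1%N f1) ^+ p = u' 0%N (sigma 0%N (psi 0%N f0)).
  by rewrite -rmorphXn -rmorphM -Hal Hsigma.
have Hg : d * sigma 1%N (psi 1%N f1) ^+ p = 0 by rewrite mulrBl E1 E2 Hcomm subrr.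
have Htd : TS' 1%N d.
  move=> a /genJ'0 [c ->]; exists 1%N; rewrite expr1 /= rmorphM.
  by rewrite -E2 -mulrA -mulrA [_ ^+ p * d]mulrC Hg !mulr0.
have [a [b [Ta Tb Hab]]] := Htor Htd.
have [c [Hrc Hpc]] : exists c, rho 1%N c = al' - a /\ psi 1%N c = al + b.
  apply: Hfib_surj; rewrite rmorphB rmorphD.
  have -> : psi' 1%N a = d - sigma 1%N b by rewrite -Hab addrK.
  by rewrite /d; ring.
have Za : a * rho 1%N f1 ^+ p = 0.
  have := (fst0 f1p_in).1; rewrite rmorphXn => /(I0R_gen _ _ _ _ 1%N G0') [be ->].
  by rewrite mulrCA [a * _]mulrC (pp_torkill _ _ _ _ _ HR') ?mulr0 //; exact: gen_self G0'.
have Zb : b * psi 1%N f1 ^+ p = 0.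
  have := (fst0 f1p_in).2; rewrite rmorphXn => /(I0R_gen _ _ _ _ 1%N G0s) [be ->].
  by rewrite mulrCA [b * _]mulrC (pp_torkill _ _ _ _ _ HS) ?mulr0 //; exact: gen_self G0s.
exists c; apply: Hfib_inj.
  by rewrite Hrho Hal' rmorphM rmorphXn Hrc mulrBl Za subr0.
by rewrite Hpsi Hal rmorphM rmorphXn Hpc mulrDl Zb addr0.
Qed.

Lemma P_I1pow z : idealX I1 p z <-> IR 1 z.
Proof.
have [G1 _ _] := f1P; have [G0 _ _] := f0P.
split.
  move/(idealX_mult _ _ _ _ (fun z => (G1 z).1)) => [c ->].
  by apply: idM; [exact: I0R_ideal | exact: f1p_in].
move/(I0R_gen _ _ _ _ 1%N G0) => [c ->] /=.
have [c' ->] := tf0.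
rewrite mulrA; apply: idM; first exact: idealX_ideal.
by apply: idealX_pow; exact: gen_self G1.
Qed.

Lemma P_ker i (y : R i.+1) :
  (exists x : R i, IR i x /\ Fis R t p I0 i x y) <->
  (exists z, ext (tup1 R t i) I1 z /\ IR i.+1 (y - z)).
Proof.
split.
  move=> [x [Hx HF]].
  have Hyp : IR i.+1 (y ^+ p) by apply: Fis_I0R Hx HF.
  have [Hr Hs] := fst0 Hyp; rewrite rmorphXn in Hr; rewrite rmorphXn in Hs.
  have H0' : IR' i 0 by apply: id0; apply: I0R_ideal.
  have H0s : IS i 0 by apply: id0; apply: I0R_ideal.
  have [z' [Hz' Hyz']] := (pp_ker _ _ _ _ _ HR' i (rho _ y)).1 (ex_intro _ 0 (conj H0' ((Fis0 _ _ _ _ _ _).2 Hr))).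
  have [zs [Hzs Hyzs]] := (pp_ker _ _ _ _ _ HS i (psi _ y)).1 (ex_intro _ 0 (conj H0s ((Fis0 _ _ _ _ _ _).2 Hs))).
  have Hd : IS' i.+1 (psi' _ z' - sigma _ zs).
    have K1 := psi'0 Hyz'; have K2 := sig0 Hyzs; rewrite rmorphB Hcomm in K1; rewrite rmorphB in K2.
    apply: idBB K2 K1; exact: I0R_ideal.
  have [e [He Hse]] := sig_onto0 Hd.
  have [z [Hrz Hpz]] : exists z, rho _ z = z' /\ psi _ z = zs + e.
    by apply: Hfib_surj; rewrite rmorphD Hse addrC subrK.
  exists z; split.
    apply: memb1; rewrite ?Hrz ?Hpz //.
    apply: idD; [exact: ext_ideal | exact: Hzs | ].
    exact: (I0R_sub_I1 _ _ _ _ _ HS p_gt0).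
  apply: memb0; rewrite rmorphB ?Hrz ?Hpz //.
  rewrite opprD addrA; apply: idB => //; exact: I0R_ideal.
move=> [z [Hz Hyz]].
exists 0; split; first by apply: id0; apply: I0R_ideal.
apply/Fis0.
have Hzp : IR i.+1 (z ^+ p).
  have [Hr Hs] := fst1 Hz; apply: memb0; rewrite rmorphXn.
    exact: (ker_pow _ _ _ _ _ HR' _ _ Hr).
  exact: (ker_pow _ _ _ _ _ HS _ _ Hs).
have IdR : is_ideal (IR i.+1) by apply: I0R_ideal.
exact: (idBr _ _ _ _ IdR (idXX _ _ _ _ p IdR Hyz) Hzp).
Qed.

Lemma P_Ftor i : exists g : R i.+1 -> R i,
  [/\ forall y, TR i.+1 y -> TR i (g y),
      (forall y y', TR i.+1 y -> TR i.+1 y' -> g y = g y' -> y = y'),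
      (forall x, TR i x -> exists y, TR i.+1 y /\ g y = x) &
      forall y, TR i.+1 y -> Fis R t p I0 i (g y) y].
Proof.
have [g' [g'T g'I g'S g'F]] := pp_Ftor _ _ _ _ _ HR' i.
have [gs [gsT gsI gsS gsF]] := pp_Ftor _ _ _ _ _ HS i.
have [gS' [gS'T gS'I gS'S gS'F]] := pp_Ftor _ _ _ _ _ HS' i.
have C1 : forall y, TR' i.+1 y -> psi' i (g' y) = gS' (psi' _ y).
  move=> y Ty; apply: (F_unique _ _ _ _ _ HS' i).
  - exact: tor_psi' (g'T _ Ty).
  - exact: gS'T (tor_psi' Ty).
  - exact: map_Fis' (g'F _ Ty).
  - exact: gS'F (tor_psi' Ty).
have C2 : forall y, TS i.+1 y -> sigma i (gs y) = gS' (sigma _ y).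
  move=> y Ty; apply: (F_unique _ _ _ _ _ HS' i).
  - exact: tor_sig (gsT _ Ty).
  - exact: gS'T (tor_sig Ty).
  - exact: map_Fis_sig (gsF _ Ty).
  - exact: gS'F (tor_sig Ty).
have Hch : forall y : R i.+1, exists x : R i,
    TR i.+1 y -> rho i x = g' (rho _ y) /\ psi i x = gs (psi _ y).
  move=> y; case: (classic (TR i.+1 y)) => Ty; last by exists 0.
  have [x Hx] : exists x, rho i x = g' (rho _ y) /\ psi i x = gs (psi _ y).
    apply: Hfib_surj; rewrite C1 ?C2 ?Hcomm //; [exact: tor_psi Ty | exact: tor_rho Ty].
  by exists x.
pose g y := proj1_sig (constructive_indefinite_description _ (Hch y)).
have gP : forall y, TR i.+1 y -> rho i (g y) = g' (rho _ y) /\ psi i (g y) = gs (psi _ y).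
  move=> y; exact: (proj2_sig (constructive_indefinite_description _ (Hch y))).
exists g; split.
- move=> y Ty; have [E1 E2] := gP y Ty; apply: tor_glue; rewrite ?E1 ?E2.
    exact: g'T (tor_rho Ty).
  exact: gsT (tor_psi Ty).
- move=> y y' Ty Ty' Eg; have [E1 E2] := gP y Ty; have [E1' E2'] := gP y' Ty'.
  apply: Hfib_inj.
    apply: g'I; [exact: tor_rho Ty | exact: tor_rho Ty' | by rewrite -E1 -E1' Eg].
  apply: gsI; [exact: tor_psi Ty | exact: tor_psi Ty' | by rewrite -E2 -E2' Eg].
- move=> x Tx.
  have [y' [Ty' Hy']] := g'S _ (tor_rho Tx).
  have [ys [Tys Hys]] := gsS _ (tor_psi Tx).
  have Eq : psi' _ y' = sigma _ ys.
    apply: gS'I; [exact: tor_psi' Ty' | exact: tor_sig Tys | ].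
    by rewrite -C1 // -C2 // Hy' Hys Hcomm.
  have [y [Hry Hpy]] := Hfib_surj _ _ _ Eq.
  have Ty : TR i.+1 y by apply: tor_glue; rewrite ?Hry ?Hpy.
  exists y; split => //; have [E1 E2] := gP y Ty; apply: Hfib_inj.
    by rewrite E1 Hry.
  by rewrite E2 Hpy.
- move=> y Ty; have [E1 E2] := gP y Ty; apply: memb0; rewrite rmorphB rmorphXn.
    rewrite Hrho E1; exact: g'F (tor_rho Ty).
  rewrite Hpsi E2; exact: gsF (tor_psi Ty).
Qed.

Lemma part1 : preperfectoid R t p I0 I1.
Proof.
have [G0 _ _] := f0P; have [G1 _ _] := f1P.
constructor.
- exact: generates_ideal G0.
- apply/HI0; rewrite !rmorph_nat; split; [exact: (pp_p _ _ _ _ _ HR') | exact: (pp_p _ _ _ _ _ HS)].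
- exact: P_inj.
- exact: P_frob.
- exact: P_Fsurj.
- by exists f0.
- by exists f1.
- exact: P_I1pow.
- exact: P_ker.
- exact: P_torkill.
- exact: P_Ftor.
Qed.

Lemma fib_unit i (z : R i) : (exists w', (1 - rho i z) * w' = 1) ->
  (exists ws, (1 - psi i z) * ws = 1) -> exists w, (1 - z) * w = 1.
Proof.
move=> [w' Hw'] [ws Hws].
have Eq : psi' i w' = sigma i ws.
  set v := psi' i (1 - rho i z).
  have Hv' : v * psi' i w' = 1 by rewrite /v -rmorphM Hw' rmorph1.
  have Ev : v = sigma i (1 - psi i z) by rewrite /v !rmorphB !rmorph1 Hcomm.
  have Hvs : v * sigma i ws = 1 by rewrite Ev -rmorphM Hws rmorph1.
  by rewrite -[LHS]mulr1 -Hvs mulrA [_ * v]mulrC Hv' mul1r.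
have [w [Hrw Hpw]] := Hfib_surj _ _ _ Eq.
exists w; apply: Hfib_inj.
  by rewrite rmorphM rmorphB rmorph1 Hrw Hw'.
by rewrite rmorphM rmorphB rmorph1 Hpw Hws.
Qed.

Lemma part2 : perfectoid R' t' p I'0 I'1 -> perfectoid S u p J0 J1 ->
  perfectoid S' u' p J'0 J'1 -> perfectoid R t p I0 I1.
Proof.
move=> [_ JR'] [_ JS] _; split; first exact: part1.
move=> i x Hx M [IM M1 Mmax]; apply: NNPP => Mx.
pose N := fun y => exists m r, M m /\ y = m + r * x.
have IN : is_ideal N.
  split.
  - by exists 0, 0; split; [exact: id0 | rewrite mul0r addr0].
  - move=> y1 y2 [m1 [r1 [H1 ->]]] [m2 [r2 [H2 ->]]]; exists (m1 + m2), (r1 + r2); split.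
      exact: idD.
    by ring.
  - move=> r y [m [r1 [H1 ->]]]; exists (r * m), (r * r1); split; first exact: idM.
    by ring.
have MN : forall y, M y -> N y by move=> y My; exists y, 0; split => //; rewrite mul0r addr0.
have N1 : N 1.
  apply: NNPP => N1; apply: Mx; apply: (Mmax N IN MN N1); exists 0, 1.
  by split; [apply: id0 | rewrite mul1r add0r].
have [m [r [Hm E]]] := N1.
have Irx : IR i (r * x) by apply: idM => //; exact: I0R_ideal.
have [w Hw] : exists w, (1 - r * x) * w = 1.
  apply: fib_unit; apply: jac_unit.
    by apply: JR'; exact: (fst0 Irx).1.
  by apply: JS; exact: (fst0 Irx).2.
apply: M1; have Em : m = 1 - r * x by rewrite E addrK.
by rewrite -Hw -Em; apply: idMr.
Qed.

Lemma part3 i :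
  (forall x y : forall j, R (j + i)%N,
     is_tilt R t p I0 i x -> is_tilt R t p I0 i y ->
     tilt_eq R' t' I'0 i (tilt_map R R' rho i x) (tilt_map R R' rho i y) ->
     tilt_eq S u J0 i (tilt_map R S psi i x) (tilt_map R S psi i y) ->
     tilt_eq R t I0 i x y) /\
  (forall (a : forall j, R' (j + i)%N) (b : forall j, S (j + i)%N),
     is_tilt R' t' p I'0 i a -> is_tilt S u p J0 i b ->
     tilt_eq S' u' J'0 i (tilt_map R' S' psi' i a) (tilt_map S S' sigma i b) ->
     exists x : forall j, R (j + i)%N,
       [/\ is_tilt R t p I0 i x,
           tilt_eq R' t' I'0 i (tilt_map R R' rho i x) a &
           tilt_eq S u J0 i (tilt_map R S psi i x) b]).
Proof.
split.
  move=> x y _ _ H1 H2 j; apply: memb0; rewrite rmorphB; [exact: H1 | exact: H2].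
move=> a b Ta Tb Hab.
have Hx : forall j, exists xj : R (j + i)%N, rho _ xj = a j /\ IS (j + i)%N (psi _ xj - b j).
  move=> j; have [e [He Hse]] := sig_onto0 (Hab j).
  have [xj [H1 H2]] : exists xj, rho _ xj = a j /\ psi _ xj = b j + e.
    by apply: Hfib_surj; rewrite rmorphD Hse addrC subrK.
  by exists xj; split => //; rewrite H2 addrC addKr.
pose x j := proj1_sig (constructive_indefinite_description _ (Hx j)).
have xP : forall j, rho _ (x j) = a j /\ IS (j + i)%N (psi _ (x j) - b j).
  move=> j; exact: (proj2_sig (constructive_indefinite_description _ (Hx j))).
exists x; split.
- move=> j; have [E1 F1] := xP j; have [E2 F2] := xP j.+1.
  apply: memb0; rewrite rmorphB rmorphXn.
    rewrite Hrho E1 E2; exact: Ta j.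
  rewrite Hpsi.
  have IdS : is_ideal (IS (j + i).+1) by apply: I0R_ideal.
  have K1 : IS (j + i).+1 (u _ (psi _ (x j)) - u _ (b j)) by rewrite -rmorphB; apply: I0R_t.
  have K2 : IS (j + i).+1 (psi _ (x j.+1) ^+ p - b j.+1 ^+ p) by apply: idXX.
  have K3 : IS (j + i).+1 (u _ (b j) - b j.+1 ^+ p) := Tb j.
  have -> : u _ (psi _ (x j)) - psi _ (x j.+1) ^+ p =
    (u _ (psi _ (x j)) - u _ (b j)) + (u _ (b j) - b j.+1 ^+ p) - (psi _ (x j.+1) ^+ p - b j.+1 ^+ p) by ring.
  by apply: idB => //; apply: idD.
- move=> j; have [E1 _] := xP j; rewrite /tilt_map E1 subrr; apply: id0; apply: I0R_ideal.
- by move=> j; have [_ F1] := xP j; exact: F1.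
Qed.

Lemma main_all :
  preperfectoid R t p I0 I1 /\
  (perfectoid R' t' p I'0 I'1 -> perfectoid S u p J0 J1 -> perfectoid S' u' p J'0 J'1 ->
   perfectoid R t p I0 I1) /\
  (forall i,
     (forall x y : forall j, R (j + i)%N,
        is_tilt R t p I0 i x -> is_tilt R t p I0 i y ->
        tilt_eq R' t' I'0 i (tilt_map R R' rho i x) (tilt_map R R' rho i y) ->
        tilt_eq S u J0 i (tilt_map R S psi i x) (tilt_map R S psi i y) ->
        tilt_eq R t I0 i x y) /\
     (forall (a : forall j, R' (j + i)%N) (b : forall j, S (j + i)%N),
        is_tilt R' t' p I'0 i a -> is_tilt S u p J0 i b ->
        tilt_eq S' u' J'0 i (tilt_map R' S' psi' i a) (tilt_map S S' sigma i b) ->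
        exists x : forall j, R (j + i)%N,
          [/\ is_tilt R t p I0 i x,
              tilt_eq R' t' I'0 i (tilt_map R R' rho i x) a &
              tilt_eq S u J0 i (tilt_map R S psi i x) b])).
Proof using All.
split; first exact: part1.
split; first exact: part2.
exact: part3.
Qed.
End Main.

Theorem proposition3p16 (p : nat) (p_prime : prime p)
  (* the towers R', S, S' with their ideals and first perfectoid pillars *)
  (R' S S' : nat -> comPzRingType)
  (t' : forall i, {rmorphism R' i -> R' i.+1})
  (u : forall i, {rmorphism S i -> S i.+1})
  (u' : forall i, {rmorphism S' i -> S' i.+1})
  (I'0 : subsetR (R' 0%N)) (J0 : subsetR (S 0%N)) (J'0 : subsetR (S' 0%N))
  (I'1 : subsetR (R' 1%N)) (J1 : subsetR (S 1%N)) (J'1 : subsetR (S' 1%N))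
  (HR' : preperfectoid R' t' p I'0 I'1)
  (HS : preperfectoid S u p J0 J1)
  (HS' : preperfectoid S' u' p J'0 J'1)
  (* the morphisms psi' : R' -> S' and sigma : S -> S' *)
  (psi' : forall i, {rmorphism R' i -> S' i})
  (sigma : forall i, {rmorphism S i -> S' i})
  (Hpsi' : tower_mor R' S' t' u' psi') (Hsigma : tower_mor S S' u u' sigma)
  (Hext0a : forall z, ext (psi' 0%N) I'0 z <-> J'0 z)
  (Hext0b : forall z, ext (sigma 0%N) J0 z <-> J'0 z)
  (Hext1a : forall z, ext (psi' 1%N) I'1 z <-> J'1 z)
  (Hext1b : forall z, ext (sigma 1%N) J1 z <-> J'1 z)
  (Hsigma_surj : forall i (y : S' i), exists x : S i, sigma i x = y)
  (* the levelwise fibre product tower R_i = R'_i x_{S'_i} S_i, with its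
     projections rho and psi (a tower of rings together with morphisms of
     towers making each R_i a fibre product) *)
  (R : nat -> comPzRingType)
  (t : forall i, {rmorphism R i -> R i.+1})
  (rho : forall i, {rmorphism R i -> R' i})
  (psi : forall i, {rmorphism R i -> S i})
  (Hrho : tower_mor R R' t t' rho) (Hpsi : tower_mor R S t u psi)
  (Hcomm : forall i x, psi' i (rho i x) = sigma i (psi i x))
  (Hfib_inj : forall i (x y : R i), rho i x = rho i y -> psi i x = psi i y -> x = y)
  (Hfib_surj : forall i (a : R' i) (b : S i), psi' i a = sigma i b ->
      exists x : R i, rho i x = a /\ psi i x = b)
  (* I_0 = I'_0 x_{J'_0} J_0 and I_1 = I'_1 x_{J'_1} J_1 *)
  (I0 : subsetR (R 0%N)) (I1 : subsetR (R 1%N))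
  (HI0 : forall x, I0 x <-> I'0 (rho 0%N x) /\ J0 (psi 0%N x))
  (HI1 : forall x, I1 x <-> I'1 (rho 1%N x) /\ J1 (psi 1%N x))
  (* (i) *)
  (Hf0 : exists f0 : R 0%N,
      [/\ generates f0 I0, generates (rho 0%N f0) I'0 & generates (psi 0%N f0) J0])
  (* (ii) *)
  (Hf1 : exists f1 : R 1%N,
      [/\ generates f1 I1, generates (rho 1%N f1) I'1 & generates (psi 1%N f1) J1])
  (* (iii) *)
  (Hcart0 : forall i,
      cartesian (I0R R t I0 i) (I0R R' t' I'0 i) (I0R S u J0 i) (I0R S' u' J'0 i)
                (rho i) (psi i) (psi' i) (sigma i))
  (Hcart1 : forall i,
      cartesian (ext (tup1 R t i) I1) (ext (tup1 R' t' i) I'1)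
                (ext (tup1 S u i) J1) (ext (tup1 S' u' i) J'1)
                (rho i.+1) (psi i.+1) (psi' i.+1) (sigma i.+1))
  (* (iv) *)
  (Htor : forall i (c : S' i), tor (tcomp S' u' i) J'0 c ->
      exists (a : R' i) (b : S i),
        [/\ tor (tcomp R' t' i) I'0 a, tor (tcomp S u i) J0 b & (psi' i a + sigma i b)%R = c]) :
  (* (1) *)
  preperfectoid R t p I0 I1 /\
  (* (2) *)
  (perfectoid R' t' p I'0 I'1 -> perfectoid S u p J0 J1 -> perfectoid S' u' p J'0 J'1 ->
   perfectoid R t p I0 I1) /\
  (* (3) the map R_i^{s.flat} -> R'_i^{s.flat} x_{S'_i^{s.flat}} S_i^{s.flat},
     x |-> (rho^flat x, psi^flat x), is bijective for every i *)
  (forall i,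
     (forall x y : forall j, R (j + i)%N,
        is_tilt R t p I0 i x -> is_tilt R t p I0 i y ->
        tilt_eq R' t' I'0 i (tilt_map R R' rho i x) (tilt_map R R' rho i y) ->
        tilt_eq S u J0 i (tilt_map R S psi i x) (tilt_map R S psi i y) ->
        tilt_eq R t I0 i x y) /\
     (forall (a : forall j, R' (j + i)%N) (b : forall j, S (j + i)%N),
        is_tilt R' t' p I'0 i a -> is_tilt S u p J0 i b ->
        tilt_eq S' u' J'0 i (tilt_map R' S' psi' i a) (tilt_map S S' sigma i b) ->
        exists x : forall j, R (j + i)%N,
          [/\ is_tilt R t p I0 i x,
              tilt_eq R' t' I'0 i (tilt_map R R' rho i x) a &
              tilt_eq S u J0 i (tilt_map R S psi i x) b])).
Proof.
exact (@main_all p p_prime R' S S' t' u u' I'0 J0 J'0 I'1 J1 J'1 HR' HS HS' psi' sigma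
  Hpsi' Hsigma Hext0a Hext0b Hext1a Hext1b Hsigma_surj R t rho psi Hrho Hpsi Hcomm
  Hfib_inj Hfib_surj I0 I1 HI0 HI1 Hf0 Hf1 Hcart0 Hcart1 Htor).
Qed.
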